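(* Let $\mathcal Q=\mathbb R^n$, $\alpha,\beta,\gamma\in[0,1]$, and let $g_s$ be a one-parameter group of transformations acting as in the context. Assume $\tilde L^{\mathcal E}_d$ is invariant: $\tilde L^{\mathcal E}_d(\tilde\Phi_{g_s}(y_k),\tilde\Phi_{g_s}(y_{k+1}),\tilde U_k^{(1)},\tilde U_k^{(2)},h)=\tilde L^{\mathcal E}_d(y_k,y_{k+1},U_k^{(1)},U_k^{(2)},h)$ for all $s$ and all arguments, where $\tilde U_k^{(1)}=\Psi_{g_s}(\bar q_k^\beta)U_k^{(1)}$ and $\tilde U_k^{(2)}=\Psi_{g_s}(\bar q_k^{1-\beta})U_k^{(2)}$. Let $\xi(y)=\frac{d}{ds}\big|_{s=0}\tilde\Phi_{g_s}(y)$ and $I_d(y,p_y)=p_y^\top\xi(y)$. Then along every solution $(y_d,U_d^{(1)},U_d^{(2)})$ of the discrete Euler–Lagrange equations $D_2\tilde L^{\mathcal E}_{d,k-1}+D_1\tilde L^{\mathcal E}_{d,k}=0$ ($k=1,\dots,N-1$) and minimisation conditions $D_{U^{(1)}}\tilde L^{\mathcal E}_{d,k}=D_{U^{(2)}}\tilde L^{\mathcal E}_{d,k}=0$ ($k=0,\dots,N-1$), one has $I_d(y_k,p^-_{y,k})=I_d(y_{k+1},p^+_{y,k+1})$ for all $k$; hence $I_d(y_k,p_{y,k})$, $p_{y,k}=p^-_{y,k}=p^+_{y,k}$, is conserved.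
   Context: Setting: $\mathcal Q=\mathbb R^n$, $y=(q,\lambda)\in T^*\mathcal Q$, controls in $\mathbb R^m$; smooth $f(q,v)$, $\rho(q)\in\mathbb R^{n\times m}$, $\mathrm g(q)$ symmetric positive definite. $\tilde L^{\mathcal E}(q,\lambda,v,v_\lambda,u)=v_\lambda^\top v+\lambda^\top(f(q,v)+\rho(q)u)-\frac12u^\top\mathrm g(q)u$. Notation: $\bar y_k^\gamma=\gamma y_k+(1-\gamma)y_{k+1}$ (similarly $\bar q_k^\gamma$), $\Delta y_k=(y_{k+1}-y_k)/h$. Approximate discrete Lagrangian: $\tilde L^{\mathcal E}_d(y_k,y_{k+1},U^{(1)},U^{(2)},h)=h[\alpha\tilde L^{\mathcal E}(\bar y_k^\gamma,\Delta y_k,U^{(1)})+(1-\alpha)\tilde L^{\mathcal E}(\bar y_k^{1-\gamma},\Delta y_k,U^{(2)})]$, with $U^{(1)},U^{(2)}$ regarded as control values attached to the points $\bar q_k^\beta$, $\bar q_k^{1-\beta}$; $\tilde L^{\mathcal E}_{d,k}$ denotes its value on the $k$-th interval. Discrete momenta: $p^-_{y,k}=-D_1\tilde L^{\mathcal E}_d(y_k,y_{k+1},U_k^{(1)},U_k^{(2)},h)$, $p^+_{y,k+1}=D_2\tilde L^{\mathcal E}_d(y_k,y_{k+1},U_k^{(1)},U_k^{(2)},h)$. Group actions: a Lie group $\mathcal G$ acts on $\mathcal Q$ by $\Phi_g$; cotangent lift $\tilde\Phi_g(q,\lambda)=(\Phi_g(q),(D\Phi_{g^{-1}}(\Phi_g(q)))^\top\lambda)$;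 the action on controls is given by linear maps $\Psi_g(q)$ with $\rho(\Phi_g(q))\Psi_g(q)u=D\Phi_g(q)\rho(q)u$. A one-parameter group of transformations is a smooth additive subgroup $s\mapsto g_s$ with $g_0=e$. *)

(* Defs.v *)
From HB Require Import structures.
From mathcomp Require Import all_boot all_order all_algebra.
From mathcomp Require Import all_classical all_reals all_analysis.
Set Implicit Arguments. Unset Strict Implicit. Unset Printing Implicit Defensive.
Import Order.TTheory GRing.Theory Num.Theory.
Import numFieldNormedType.Exports.
Local Open Scope ring_scope.

Fixpoint dd (R : realType) (V W : normedModType R) (vs : seq V) (f : V -> W)
  : V -> W :=
  match vs with
  | [::] => f
  | v :: vs' => fun x => 'D_v (dd vs' f) x
  end.

Definition smooth (R : realType) (V W : normedModType R) (f : V -> W) : Prop :=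
  forall (vs : seq V) (x : V), differentiable (dd vs f) x.

Definition dotv (R : realType) n (a b : 'cV[R]_n) : R := (a^T *m b) 0 0.

(* (DF(q))^T lam, for F : R^n -> R^n, as a column vector. *)
Definition dTapp (R : realType) n (F : 'cV[R]_n -> 'cV[R]_n) (q lam : 'cV[R]_n)
  : 'cV[R]_n :=
  \col_(i < n) dotv lam ('d F q (delta_mx i 0)).

Definition LE (R : realType) n m
  (f : 'cV[R]_n -> 'cV[R]_n -> 'cV[R]_n) (rho : 'cV[R]_n -> 'M[R]_(n, m))
  (g : 'cV[R]_n -> 'M[R]_m)
  (q lam v vlam : 'cV[R]_n) (u : 'cV[R]_m) : R :=
  dotv vlam v + dotv lam (f q v + rho q *m u) - 2^-1 * dotv u (g q *m u).

Definition cvx (R : realType) n (gam : R) (a b : 'cV[R]_n * 'cV[R]_n)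
  : 'cV[R]_n * 'cV[R]_n :=
  (gam *: a.1 + (1 - gam) *: b.1, gam *: a.2 + (1 - gam) *: b.2).

Definition LEd (R : realType) n m
  (f : 'cV[R]_n -> 'cV[R]_n -> 'cV[R]_n) (rho : 'cV[R]_n -> 'M[R]_(n, m))
  (g : 'cV[R]_n -> 'M[R]_m) (alpha gam : R)
  (yk yk1 : 'cV[R]_n * 'cV[R]_n) (U1 U2 : 'cV[R]_m) (h : R) : R :=
  let yg := cvx gam yk yk1 in
  let yg' := cvx (1 - gam) yk yk1 in
  let dq := h^-1 *: (yk1.1 - yk.1) in
  let dlam := h^-1 *: (yk1.2 - yk.2) in
  h * (alpha * LE f rho g yg.1 yg.2 dq dlam U1
       + (1 - alpha) * LE f rho g yg'.1 yg'.2 dq dlam U2).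

(* Main.v *)
Require Import Defs.
From HB Require Import structures.
From mathcomp Require Import all_boot all_order all_algebra.
From mathcomp Require Import all_classical all_reals all_analysis.
Import Order.TTheory GRing.Theory Num.Theory.
Import numFieldNormedType.Exports.
Local Open Scope ring_scope.
From mathcomp Require Import ring lra.

Module Helpers.
Local Set Implicit Arguments. Local Unset Strict Implicit.
Section H.
Variable R : realType.

Lemma diff_fst (U V : normedModType R) (x : U * V) : differentiable (@fst U V) x.
Proof.
have lin : linear (@fst U V) by [].
pose lM := GRing.isLinear.Build _ _ _ _ _ lin.
pose L : {linear _ -> _} := HB.pack (@fst U V) lM.
rewrite -[fst]/(L : _ -> _).
apply: linear_differentiable => y; exact: cvg_fst.
Qed.

Lemma diff_snd (U V : normedModType R) (x : U * V) : differentiable (@snd U V) x.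
Proof.
have lin : linear (@snd U V) by [].
pose lM := GRing.isLinear.Build _ _ _ _ _ lin.
pose L : {linear _ -> _} := HB.pack (@snd U V) lM.
rewrite -[snd]/(L : _ -> _).
apply: linear_differentiable => y; exact: cvg_snd.
Qed.

Lemma diff_idE (U : normedModType R) (x : U) : 'd id x = id :> (U -> U).
Proof. by rewrite diff_val. Qed.

Lemma diff_mx (U : normedModType R) a b (M : U -> 'M[R]_(a, b)) x :
  (forall i j, differentiable (fun z => M z i j) x) -> differentiable M x.
Proof.
move=> H.
have -> : M = \sum_(i < a) \sum_(j < b) (fun z => M z i j *: delta_mx i j).
  apply/funext => z; rewrite fct_sumE (matrix_sum_delta (M z)).
  by apply: eq_bigr => i _; rewrite fct_sumE.
apply: differentiable_sum => i; apply: differentiable_sum => j.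
exact: differentiableZl.
Qed.

Lemma diff_coordf (U : normedModType R) a b (M : U -> 'M[R]_(a, b)) x i j :
  differentiable M x -> differentiable (fun z => M z i j) x.
Proof.
move=> dM; apply: (@differentiable_comp _ _ _ _ M (fun N : 'M[R]_(a,b) => N i j)) => //.
exact: differentiable_coord.
Qed.

Lemma diff_mulmx (U : normedModType R) a b c (A : U -> 'M[R]_(a, b))
  (B : U -> 'M[R]_(b, c)) x :
  differentiable A x -> differentiable B x -> differentiable (fun z => A z *m B z) x.
Proof.
move=> dA dB; apply: diff_mx => i j.
have -> : (fun z => (A z *m B z) i j) = \sum_(k < b) ((fun z => A z i k) * (fun z => B z k j)).
  by apply/funext => z; rewrite fct_sumE mxE.
apply: differentiable_sum => k; apply: differentiableM; exact: diff_coordf.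
Qed.

Lemma dD (U W : normedModType R) (f g : U -> W) x :
  differentiable f x -> differentiable g x -> differentiable (fun z => f z + g z) x.
Proof. exact: differentiableD. Qed.
Lemma dB (U W : normedModType R) (f g : U -> W) x :
  differentiable f x -> differentiable g x -> differentiable (fun z => f z - g z) x.
Proof. exact: differentiableB. Qed.
Lemma dN (U W : normedModType R) (f : U -> W) x :
  differentiable f x -> differentiable (fun z => - f z) x.
Proof. exact: differentiableN. Qed.
Lemma dM (U : normedModType R) (f g : U -> R^o) x :
  differentiable f x -> differentiable g x -> differentiable (fun z => f z * g z) x.
Proof. exact: differentiableM. Qed.
Lemma dZ (U W : normedModType R) (f : U -> W) (k : R) x :
  differentiable f x -> differentiable (fun z => k *: f z) x.
Proof. exact: differentiableZ. Qed.
Lemma dC (U W : normedModType R) (c : W) (x : U) : differentiable (fun _ => c) x.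
Proof. exact: differentiable_cst. Qed.
Lemma dI (U : normedModType R) (x : U) : differentiable (fun z => z) x.
Proof. exact: ex_diff. Qed.
Lemma dF (U V W : normedModType R) (f : U -> V) (g : V -> W) x :
  differentiable f x -> differentiable g (f x) -> differentiable (fun z => g (f z)) x.
Proof. exact: differentiable_comp. Qed.
Lemma dP (U V W : normedModType R) (f : U -> V) (g : U -> W) x :
  differentiable f x -> differentiable g x -> differentiable (fun z => (f z, g z)) x.
Proof. exact: differentiable_pair. Qed.
Lemma d1 (U V W : normedModType R) (f : U -> V * W) x :
  differentiable f x -> differentiable (fun z => (f z).1) x.
Proof. by move=> H; apply: dF => //; exact: diff_fst. Qed.
Lemma d2 (U V W : normedModType R) (f : U -> V * W) x :
  differentiable f x -> differentiable (fun z => (f z).2) x.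
Proof. by move=> H; apply: dF => //; exact: diff_snd. Qed.

Lemma dT (U : normedModType R) a b (A : U -> 'M[R]_(a, b)) x :
  differentiable A x -> differentiable (fun z => (A z)^T) x.
Proof.
move=> dA; apply: diff_mx => i j.
have -> : (fun z => (A z)^T i j) = (fun z => A z j i) by apply/funext => z; rewrite mxE.
exact: diff_coordf.
Qed.

Lemma ddotv (U : normedModType R) k (A B : U -> 'cV[R]_k) x :
  differentiable A x -> differentiable B x -> differentiable (fun z => dotv (A z) (B z)) x.
Proof.
move=> dA dB; rewrite /dotv.
apply: (@diff_coordf _ _ _ (fun z => (A z)^T *m B z)).
by apply: diff_mulmx => //; apply: dT.
Qed.

Lemma partial_l (A B W : normedModType R) (F : A * B -> W) a b :
  differentiable F (a, b) ->
  differentiable (fun z => F (z, b)) a /\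
  forall w, 'd (fun z => F (z, b)) a w = 'd F (a, b) (w, 0).
Proof.
move=> dFab.
have dj : differentiable (fun z : A => (z, b)) a by apply: dP; [apply: dI|apply: dC].
split; first exact: (dF dj dFab).
move=> w.
rewrite -[fun z => F (z, b)]/(F \o (fun z : A => (z, b))) diff_comp //=.
rewrite diff_pair; [|apply: dI|apply: dC].
by rewrite diff_idE diff_cst.
Qed.

Lemma partial_r (A B W : normedModType R) (F : A * B -> W) a b :
  differentiable F (a, b) ->
  differentiable (fun z => F (a, z)) b /\
  forall w, 'd (fun z => F (a, z)) b w = 'd F (a, b) (0, w).
Proof.
move=> dFab.
have dj : differentiable (fun z : B => (a, z)) b by apply: dP; [apply: dC|apply: dI].
split; first exact: (dF dj dFab).
move=> w.
rewrite -[fun z => F (a, z)]/(F \o (fun z : B => (a, z))) diff_comp //=.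
rewrite diff_pair; [|apply: dC|apply: dI].
by rewrite diff_idE diff_cst.
Qed.

Lemma dotvDl k (a b c : 'cV[R]_k) : dotv (a + b) c = dotv a c + dotv b c.
Proof. by rewrite /dotv linearD mulmxDl mxE. Qed.
Lemma dotvDr k (a b c : 'cV[R]_k) : dotv a (b + c) = dotv a b + dotv a c.
Proof. by rewrite /dotv mulmxDr mxE. Qed.
Lemma dotvZl k t (a c : 'cV[R]_k) : dotv (t *: a) c = t * dotv a c.
Proof. by rewrite /dotv linearZ /= -scalemxAl mxE. Qed.
Lemma dotvZr k t (a c : 'cV[R]_k) : dotv a (t *: c) = t * dotv a c.
Proof. by rewrite /dotv -scalemxAr mxE. Qed.
Lemma dotv0l k (c : 'cV[R]_k) : dotv 0 c = 0.
Proof. by rewrite /dotv trmx0 mul0mx mxE. Qed.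
Lemma dotv0r k (c : 'cV[R]_k) : dotv c 0 = 0.
Proof. by rewrite /dotv mulmx0 mxE. Qed.
Lemma dotv_delta k (a : 'cV[R]_k) i : dotv a (delta_mx i 0) = a i 0.
Proof. by rewrite /dotv -colE !mxE. Qed.

Lemma inj_unit k (P : 'M[R]_k) :
  (forall U : 'cV[R]_k, P *m U = 0 -> U = 0) -> P \in unitmx.
Proof.
move=> Hinj; rewrite -unitmx_tr -row_free_unit -kermx_eq0.
apply/eqP/row_matrixP => i; rewrite row0.
have H0 : row i (kermx P^T) *m P^T = 0 by rewrite -row_mul mulmx_ker row0.
apply: trmx_inj; rewrite trmx0; apply: Hinj.
by have := congr1 trmx H0; rewrite trmx_mul trmxK trmx0.
Qed.


Lemma LE_diff (U : normedModType R) n m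
  (f : 'cV[R]_n -> 'cV[R]_n -> 'cV[R]_n)
  (rho : 'cV[R]_n -> 'M[R]_(n, m))
  (g : 'cV[R]_n -> 'M[R]_m)
  (f_smooth : smooth (fun qv : 'cV[R]_n * 'cV[R]_n => f qv.1 qv.2))
  (rho_smooth : smooth rho)
  (g_smooth : smooth g)
  (q l v vl : U -> 'cV[R]_n) (u : U -> 'cV[R]_m) x :
  differentiable q x -> differentiable l x -> differentiable v x ->
  differentiable vl x -> differentiable u x ->
  differentiable (fun z => LE f rho g (q z) (l z) (v z) (vl z) (u z)) x.
Proof.
move=> dq dl dv dvl du; rewrite /LE.
have df : differentiable (fun z => f (q z) (v z)) x.
  apply: (@dF _ _ _ (fun z => (q z, v z)) (fun qv => f qv.1 qv.2)).
    exact: dP.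
  exact: (f_smooth [::]).
have drho : differentiable (fun z => rho (q z)) x.
  by apply: dF => //; exact: (rho_smooth [::]).
have dg : differentiable (fun z => g (q z)) x.
  by apply: dF => //; exact: (g_smooth [::]).
apply: dB; first by apply: dD; apply: ddotv => //; apply: dD => //; apply: diff_mulmx.
apply: dM; first exact: dC.
by apply: ddotv => //; apply: diff_mulmx.
Qed.

Lemma Ld_diff n m
  (f : 'cV[R]_n -> 'cV[R]_n -> 'cV[R]_n)
  (rho : 'cV[R]_n -> 'M[R]_(n, m))
  (g : 'cV[R]_n -> 'M[R]_m)
  (f_smooth : smooth (fun qv : 'cV[R]_n * 'cV[R]_n => f qv.1 qv.2))
  (rho_smooth : smooth rho)
  (g_smooth : smooth g) alpha gam h
  (p : (('cV[R]_n * 'cV[R]_n) * ('cV[R]_n * 'cV[R]_n)) * ('cV[R]_m * 'cV[R]_m)) :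
  differentiable (fun p : (('cV[R]_n * 'cV[R]_n) * ('cV[R]_n * 'cV[R]_n)) * ('cV[R]_m * 'cV[R]_m) =>
     LEd f rho g alpha gam p.1.1 p.1.2 p.2.1 p.2.2 h) p.
Proof.
rewrite /LEd /cvx /=.
apply: dM; first exact: dC.
apply: dD; apply: dM; try exact: dC; apply: (LE_diff f_smooth rho_smooth g_smooth); repeat (first [apply: dD | apply: dB | apply: dZ | apply: dN | apply: d1 | apply: d2 | apply: dI]).
Qed.

End H.
End Helpers.
Import Helpers.

Theorem mainTheorem12
  (R : realType) (n m : nat)
  (* dynamics and cost data *)
  (f : 'cV[R]_n -> 'cV[R]_n -> 'cV[R]_n)
  (rho : 'cV[R]_n -> 'M[R]_(n, m))
  (g : 'cV[R]_n -> 'M[R]_m)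
  (f_smooth : smooth (fun qv : 'cV[R]_n * 'cV[R]_n => f qv.1 qv.2))
  (rho_smooth : smooth rho)
  (g_smooth : smooth g)
  (g_sym : forall q, (g q)^T = g q)
  (g_pd : forall q (u : 'cV[R]_m), u != 0 -> 0 < dotv u (g q *m u))
  (* parameters *)
  (alpha beta gam : R)
  (alpha01 : 0 <= alpha <= 1) (beta01 : 0 <= beta <= 1) (gam01 : 0 <= gam <= 1)
  (* a group G (carrier, operations, axioms) *)
  (G : Type) (gmul : G -> G -> G) (gone : G) (ginv : G -> G)
  (gmulA : forall a b c, gmul a (gmul b c) = gmul (gmul a b) c)
  (gmul1 : forall a, gmul gone a = a)
  (gmulV : forall a, gmul (ginv a) a = gone)
  (* its action on Q = R^n *)
  (Phi : G -> 'cV[R]_n -> 'cV[R]_n)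
  (Phi1 : forall q, Phi gone q = q)
  (PhiM : forall a b q, Phi (gmul a b) q = Phi a (Phi b q))
  (Phi_smooth : forall a, smooth (Phi a))
  (* its action on controls, by linear maps Psi_a(q) *)
  (Psi : G -> 'cV[R]_n -> 'M[R]_m)
  (Psi_rho : forall a q (u : 'cV[R]_m),
      rho (Phi a q) *m (Psi a q *m u) = 'd (Phi a) q (rho q *m u))
  (* a one-parameter group of transformations s |-> g_s *)
  (gs : R -> G)
  (gs0 : gs 0 = gone)
  (gsD : forall s t, gs (s + t) = gmul (gs s) (gs t))
  (gs_Phi_smooth : smooth (fun sq : R^o * 'cV[R]_n => Phi (gs sq.1) sq.2))
  (gs_Psi_smooth : smooth (fun sq : R^o * 'cV[R]_n => Psi (gs sq.1) sq.2)) :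
  (* cotangent lift of the action *)
  let PhiT (a : G) (y : 'cV[R]_n * 'cV[R]_n) : 'cV[R]_n * 'cV[R]_n :=
    (Phi a y.1, dTapp (Phi (ginv a)) (Phi a y.1) y.2) in
  let Ld := LEd f rho g alpha gam in
  (* invariance of the discrete Lagrangian *)
  (forall (s : R) (yk yk1 : 'cV[R]_n * 'cV[R]_n) (U1 U2 : 'cV[R]_m) (h : R),
      Ld (PhiT (gs s) yk) (PhiT (gs s) yk1)
         (Psi (gs s) (cvx beta yk yk1).1 *m U1)
         (Psi (gs s) (cvx (1 - beta) yk yk1).1 *m U2) h
      = Ld yk yk1 U1 U2 h) ->
  (* infinitesimal generator and Noether quantity I_d(y, p) = p^T xi(y) *)
  let xi (y : 'cV[R]_n * 'cV[R]_n) : 'cV[R]_n * 'cV[R]_n :=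
    'D_1 (fun s : R^o => PhiT (gs s) y) 0 in
  let Id (y : 'cV[R]_n * 'cV[R]_n)
         (p : 'cV[R]_n * 'cV[R]_n -> R) : R := p (xi y) in
  forall (N : nat) (h : R) (y : nat -> 'cV[R]_n * 'cV[R]_n)
         (U1 U2 : nat -> 'cV[R]_m),
  0 < h ->
  (* discrete momenta p^-_{y,k} = -D_1 L_d, p^+_{y,k+1} = D_2 L_d (as covectors) *)
  let pminus (k : nat) : 'cV[R]_n * 'cV[R]_n -> R :=
    fun w => - 'd (fun z => Ld z (y k.+1) (U1 k) (U2 k) h) (y k) w in
  let pplus (k : nat) : 'cV[R]_n * 'cV[R]_n -> R :=
    fun w => 'd (fun z => Ld (y k.-1) z (U1 k.-1) (U2 k.-1) h) (y k) w in
  (* discrete Euler-Lagrange equations, k = 1, ..., N-1 *)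
  (forall k, (0 < k < N)%N -> forall w,
      'd (fun z => Ld (y k.-1) z (U1 k.-1) (U2 k.-1) h) (y k) w
      + 'd (fun z => Ld z (y k.+1) (U1 k) (U2 k) h) (y k) w = 0) ->
  (* minimisation conditions, k = 0, ..., N-1 *)
  (forall k, (k < N)%N -> forall v : 'cV[R]_m,
      'd (fun U => Ld (y k) (y k.+1) U (U2 k) h) (U1 k) v = 0) ->
  (forall k, (k < N)%N -> forall v : 'cV[R]_m,
      'd (fun U => Ld (y k) (y k.+1) (U1 k) U h) (U2 k) v = 0) ->
  (forall k, (k < N)%N -> Id (y k) (pminus k) = Id (y k.+1) (pplus k.+1))
  /\ (forall k, (k < N)%N -> Id (y k) (pminus k) = Id (y 0%N) (pminus 0%N))
  /\ (forall k, (0 < k <= N)%N -> Id (y k) (pplus k) = Id (y 0%N) (pminus 0%N)).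
Proof.
move=> PhiT Ld Hinv xi Id N h y U1 U2 hpos pminus pplus HEL HU1 HU2.
pose FF := fun sq : R^o * 'cV[R]_n => Phi (gs sq.1) sq.2.
pose PP := fun sq : R^o * 'cV[R]_n => Psi (gs sq.1) sq.2.
have dFF : forall x, differentiable FF x := fun x => gs_Phi_smooth [::] x.
have dPP : forall x, differentiable PP x := fun x => gs_Psi_smooth [::] x.
have Phi_inv : forall s, Phi (ginv (gs s)) = fun q => FF (- s, q).
  move=> s; apply/funext => q.
  have E1 : forall r, Phi (gs s) (Phi (gs (- s)) r) = r.
    by move=> r; rewrite -PhiM -gsD subrr gs0 Phi1.
  by rewrite -{1}(E1 q) -PhiM gmulV Phi1.
have dPhi : forall s p e, 'd (Phi (ginv (gs s))) p e = 'D_((0 : R^o), e) FF (- s, p).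
  move=> s p e; rewrite Phi_inv ((partial_r (dFF (- s, p))).2 e) deriveE //.
have PTE : forall y0, (fun s : R^o => PhiT (gs s) y0) = fun s : R^o =>
    (FF (s, y0.1), \col_i dotv y0.2 ('D_((0 : R^o), delta_mx i 0) FF (- s, FF (s, y0.1)))).
  move=> y0; apply/funext => s; rewrite /PhiT /dTapp; congr pair.
  by apply/matrixP => i j; rewrite !mxE dPhi.
have dPT : forall y0, differentiable (fun s : R^o => PhiT (gs s) y0) 0.
  move=> y0; rewrite PTE; apply: dP.
    apply: (@dF _ _ _ _ (fun s : R^o => (s, y0.1)) FF); last exact: dFF.
    by apply: dP; [apply: dI|apply: dC].
  apply: diff_mx => i j.
  have -> : (fun s : R^o => (\col_i dotv y0.2 ('D_((0 : R^o), delta_mx i 0) FF (- s, FF (s, y0.1)))) i j)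
     = fun s : R^o => dotv y0.2 ('D_((0 : R^o), delta_mx i 0) FF (- s, FF (s, y0.1))).
    by apply/funext => s; rewrite mxE.
  apply: ddotv; first exact: dC.
  apply: (@dF _ _ _ _ (fun s : R^o => (- s, FF (s, y0.1))) (dd [:: ((0 : R^o), delta_mx i 0)] FF)); last exact: gs_Phi_smooth.
  apply: dP; first by apply: dN; apply: dI.
  apply: (@dF _ _ _ _ (fun s : R^o => (s, y0.1)) FF); last exact: dFF.
  by apply: dP; [apply: dI|apply: dC].
have Phi_inv0 : Phi (ginv (gs 0)) = id.
  by rewrite Phi_inv; apply/funext => q; rewrite /FF /= oppr0 gs0 Phi1.
have PT0 : forall y0, PhiT (gs 0) y0 = y0.
  move=> [a b]; rewrite /PhiT /dTapp Phi_inv0 diff_idE gs0 Phi1 /=; congr pair.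
  by apply/matrixP => i j; rewrite mxE dotv_delta (ord1 j).
have xiE : forall y0, xi y0 = 'd (fun s : R^o => PhiT (gs s) y0) 0 1.
  by move=> y0; exact: (@deriveE R _ _ _ _ (1 : R^o) (dPT y0)).
have part1 : forall k, (k < N)%N -> Id (y k) (pminus k) = Id (y k.+1) (pplus k.+1).
  move=> k kN.
  pose qb := (cvx beta (y k) (y k.+1)).1.
  pose qb' := (cvx (1 - beta) (y k) (y k.+1)).1.
  pose P := Psi (gs 0) qb.
  pose P' := Psi (gs 0) qb'.
  have slot1 : alpha = 0 -> forall a b c c' d hh, Ld a b c d hh = Ld a b c' d hh.
    by move=> a0 a b c c' d hh; rewrite /Ld /LEd a0 !mul0r !add0r.
  have slot2 : 1 - alpha = 0 -> forall a b c d d' hh, Ld a b c d hh = Ld a b c d' hh.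
    by move=> a0 a b c d d' hh; rewrite /Ld /LEd a0 !mul0r !addr0.
  pose ql := cvx gam (y k) (y k.+1).
  pose ql' := cvx (1 - gam) (y k) (y k.+1).
  have quad : forall (a b : 'cV[R]_n * 'cV[R]_n) (c d : 'cV[R]_m) hh, Ld a b c d hh =
      hh * (alpha * LE f rho g (cvx gam a b).1 (cvx gam a b).2 (hh^-1 *: (b.1 - a.1)) (hh^-1 *: (b.2 - a.2)) 0
        + (1 - alpha) * LE f rho g (cvx (1 - gam) a b).1 (cvx (1 - gam) a b).2 (hh^-1 *: (b.1 - a.1)) (hh^-1 *: (b.2 - a.2)) 0)
      + hh * alpha * (dotv (cvx gam a b).2 (rho (cvx gam a b).1 *m c) - 2^-1 * dotv c (g (cvx gam a b).1 *m c))
      + hh * (1 - alpha) * (dotv (cvx (1 - gam) a b).2 (rho (cvx (1 - gam) a b).1 *m d) - 2^-1 * dotv d (g (cvx (1 - gam) a b).1 *m d)).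
    move=> a b c d hh; rewrite /Ld /LEd /LE ?mulmx0 ?addr0 ?dotv0l ?dotvDr ?dotv0r ?mulr0 ?subr0.
    ring.
  have inj1 : alpha != 0 -> P \in unitmx.
    move=> a0; apply: inj_unit => U PU.
    have E : forall t : R, Ld (y k) (y k.+1) 0 0 1 = Ld (y k) (y k.+1) (t *: U) 0 1.
      move=> t; have := Hinv 0 (y k) (y k.+1) (t *: U) 0 1.
      by rewrite !PT0 -scalemxAr -/qb -/P PU scaler0 !mulmx0.
    have E1 := E 1; have E2 := E 2.
    rewrite !quad -?scalemxAr ?dotvZl ?dotvZr ?mulmx0 ?dotv0l ?dotv0r in E1 E2.
    set b := dotv U _ in E1 E2.
    set a := dotv _ (rho _ *m U) in E1 E2.
    have eb : b = 0.
      have H1 : alpha * (a - 2^-1 * b) = 0 by lra.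
      have H2 : alpha * (2 * a - 2 * b) = 0 by lra.
      move/eqP: H1; rewrite mulf_eq0 (negbTE a0) /= => /eqP H1.
      move/eqP: H2; rewrite mulf_eq0 (negbTE a0) /= => /eqP H2.
      lra.
    apply/eqP; apply/negPn/negP => U0.
    by have := @g_pd (cvx gam (y k) (y k.+1)).1 U U0; rewrite -/b eb ltxx.
  have inj2 : 1 - alpha != 0 -> P' \in unitmx.
    move=> a0; apply: inj_unit => U PU.
    have E : forall t : R, Ld (y k) (y k.+1) 0 0 1 = Ld (y k) (y k.+1) 0 (t *: U) 1.
      move=> t; have := Hinv 0 (y k) (y k.+1) 0 (t *: U) 1.
      by rewrite !PT0 -scalemxAr -/qb' -/P' PU scaler0 !mulmx0.
    have E1 := E 1; have E2 := E 2.
    rewrite !quad -?scalemxAr ?dotvZl ?dotvZr ?mulmx0 ?dotv0l ?dotv0r in E1 E2.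
    set b := dotv U _ in E1 E2.
    set a := dotv _ (rho _ *m U) in E1 E2.
    have eb : b = 0.
      have H1 : (1 - alpha) * (a - 2^-1 * b) = 0 by lra.
      have H2 : (1 - alpha) * (2 * a - 2 * b) = 0 by lra.
      move/eqP: H1; rewrite mulf_eq0 (negbTE a0) /= => /eqP H1.
      move/eqP: H2; rewrite mulf_eq0 (negbTE a0) /= => /eqP H2.
      lra.
    apply/eqP; apply/negPn/negP => U0.
    by have := @g_pd (cvx (1 - gam) (y k) (y k.+1)).1 U U0; rewrite -/b eb ltxx.
  have [V1 HV1] : exists V1, alpha != 0 -> P *m V1 = U1 k.
    case: (eqVneq alpha 0) => a0; first by exists (U1 k).
    by exists (invmx P *m U1 k) => _; rewrite mulmxA mulmxV ?mul1mx // inj1.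
  have [V2 HV2] : exists V2, 1 - alpha != 0 -> P' *m V2 = U2 k.
    case: (eqVneq (1 - alpha) 0) => a0; first by exists (U2 k).
    by exists (invmx P' *m U2 k) => _; rewrite mulmxA mulmxV ?mul1mx // inj2.
  pose c1 := fun s : R^o => PP (s, qb) *m V1 + (U1 k - P *m V1).
  pose c2 := fun s : R^o => PP (s, qb') *m V2 + (U2 k - P' *m V2).
  pose Gam := fun s : R^o => ((PhiT (gs s) (y k), PhiT (gs s) (y k.+1)), (c1 s, c2 s)).
  pose F := fun p : (('cV[R]_n * 'cV[R]_n) * ('cV[R]_n * 'cV[R]_n)) * ('cV[R]_m * 'cV[R]_m) =>
     Ld p.1.1 p.1.2 p.2.1 p.2.2 h.
  have dFd : forall p, differentiable F p.
    move=> p; exact: (Ld_diff f_smooth rho_smooth g_smooth alpha gam h p).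
  have Gam0 : Gam 0 = ((y k, y k.+1), (U1 k, U2 k)).
    by rewrite /Gam !PT0 /c1 /c2 /PP /= -/qb -/qb' -/P -/P' !(addrC (_ *m _)) !subrK.
  have sl1 : forall A B X1 Y2, Ld A B (X1 + (U1 k - P *m V1)) Y2 h = Ld A B X1 Y2 h.
    move=> A B X1 Y2; case: (eqVneq alpha 0) => a0; first exact: slot1.
    by rewrite HV1 // subrr addr0.
  have sl2 : forall A B X1 Y2, Ld A B X1 (Y2 + (U2 k - P' *m V2)) h = Ld A B X1 Y2 h.
    move=> A B X1 Y2; case: (eqVneq (1 - alpha) 0) => a0; first exact: slot2.
    by rewrite HV2 // subrr addr0.
  have HGc : forall s, F (Gam s) = Ld (y k) (y k.+1) V1 V2 h.
    move=> s; rewrite /F /Gam /c1 /c2 /= sl1 sl2.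
    exact: Hinv.
  have dc1 : differentiable c1 0.
    apply: dD; last exact: dC.
    apply: diff_mulmx; last exact: dC.
    apply: (@dF _ _ _ _ (fun s : R^o => (s, qb)) PP 0 _ (dPP _)).
    by apply: dP; [apply: dI|apply: dC].
  have dc2 : differentiable c2 0.
    apply: dD; last exact: dC.
    apply: diff_mulmx; last exact: dC.
    apply: (@dF _ _ _ _ (fun s : R^o => (s, qb')) PP 0 _ (dPP _)).
    by apply: dP; [apply: dI|apply: dC].
  have dGam : differentiable Gam 0.
    apply: dP; [apply: dP; apply: dPT | apply: dP; [exact: dc1 | exact: dc2]].
  have dH : 'd F (Gam 0) ('d Gam 0 1) = 0.
    have : 'D_1 (F \o Gam) 0 = 0.
      rewrite (_ : F \o Gam = cst (Ld (y k) (y k.+1) V1 V2 h)); first exact: derive_cst.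
      by apply/funext => s; exact: HGc.
    rewrite (deriveE _ (differentiable_comp dGam (dFd _))).
    by rewrite (diff_comp dGam (dFd _)).
  have dGam1 : 'd Gam 0 1 = ((xi (y k), xi (y k.+1)), ('d c1 0 1, 'd c2 0 1)).
    have dA : differentiable (fun s : R^o => (PhiT (gs s) (y k), PhiT (gs s) (y k.+1))) 0.
      by apply: dP; apply: dPT.
    have dB' : differentiable (fun s : R^o => (c1 s, c2 s)) 0 by apply: dP.
    by rewrite /Gam (diff_pair dA dB') (diff_pair (dPT _) (dPT _)) (diff_pair dc1 dc2) /= !xiE.
  rewrite Gam0 dGam1 in dH.
  have dsplit : forall (a b : 'cV[R]_n * 'cV[R]_n) (c d : 'cV[R]_m),
      'd F ((y k, y k.+1), (U1 k, U2 k)) ((a, b), (c, d)) =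
      'd F ((y k, y k.+1), (U1 k, U2 k)) ((a, 0), 0) + 'd F ((y k, y k.+1), (U1 k, U2 k)) ((0, b), 0)
      + 'd F ((y k, y k.+1), (U1 k, U2 k)) (0, (c, 0)) + 'd F ((y k, y k.+1), (U1 k, U2 k)) (0, (0, d)).
    move=> a b c d; rewrite -!linearD; congr ('d F _ _).
    have pD : forall (A B : zmodType) (x z : A * B), x + z = (x.1 + z.1, x.2 + z.2).
      by move=> A B [? ?] [? ?].
    have p0 : forall (A B : zmodType), (0 : A * B) = (0, 0) by [].
    by rewrite !pD /= ?p0 /= ?addr0 ?add0r; case: a; case: b.
  have [dG EG] := partial_l (dFd ((y k, y k.+1), (U1 k, U2 k))).
  have [_ E1] := partial_l dG.
  have [_ E2] := partial_r dG.
  have [dK EK] := partial_r (dFd ((y k, y k.+1), (U1 k, U2 k))).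
  have [_ E3] := partial_l dK.
  have [_ E4] := partial_r dK.
  have e1 : 'd (fun z => Ld z (y k.+1) (U1 k) (U2 k) h) (y k) (xi (y k)) =
      'd F ((y k, y k.+1), (U1 k, U2 k)) ((xi (y k), 0), 0).
    by rewrite -EG; exact: E1.
  have e2 : 'd (fun z => Ld (y k) z (U1 k) (U2 k) h) (y k.+1) (xi (y k.+1)) =
      'd F ((y k, y k.+1), (U1 k, U2 k)) ((0, xi (y k.+1)), 0).
    by rewrite -EG; exact: E2.
  have e3 : 'd F ((y k, y k.+1), (U1 k, U2 k)) (0, ('d c1 0 1, 0)) = 0.
    by rewrite -EK -E3; exact: HU1.
  have e4 : 'd F ((y k, y k.+1), (U1 k, U2 k)) (0, (0, 'd c2 0 1)) = 0.
    by rewrite -EK -E4; exact: HU2.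
  rewrite dsplit e3 e4 -e1 -e2 !addr0 in dH.
  rewrite /Id /pminus /pplus /=.
  by apply/eqP; rewrite eq_sym -subr_eq0 opprK addrC; apply/eqP; exact: dH.
have ELk : forall k, (0 < k < N)%N -> Id (y k) (pplus k) = Id (y k) (pminus k).
  move=> k Hk; rewrite /Id /pminus /pplus /=.
  by apply/eqP; rewrite -subr_eq0 opprK; apply/eqP; exact: HEL.
have part2 : forall k, (k < N)%N -> Id (y k) (pminus k) = Id (y 0%N) (pminus 0%N).
  elim=> [//|k IH] Hk.
  have kN : (k < N)%N by apply: ltn_trans Hk.
  have H1 : (0 < k.+1 < N)%N by rewrite /= Hk.
  by rewrite -(ELk k.+1 H1) -(part1 k kN); exact: IH.
split; first exact: part1.
split; first exact: part2.
case=> [//|k] /andP [_ Hk].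
have kN : (k < N)%N by [].
by rewrite -(part1 k kN); exact: part2.
Qed.
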